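(* For every $m \in \mathbb{Z}_{>0}$, we have $h_s(m) \geq m(m-1)+1$; for $m\ge 2$ the right-hand side equals $h(1,m-1)$.
   Context: A real matrix is called totally $1$-submodular if every square submatrix (of every size) has determinant of absolute value at most $1$. For $t \in \mathbb{R}^m$ and $A\in\mathbb{R}^{m\times n}$ with columns $A_1,\dots,A_n$, $t+A$ denotes the matrix with columns $t+A_1,\dots,t+A_n$. The shifted Heller constant $h_s(m)$ is the maximum $n$ such that there exist $t \in [0,1)^m\setminus\{\mathbf 0\}$ and $A \in \{-1,0,1\}^{m\times n}$ with pairwise distinct columns such that $t+A$ is totally $1$-submodular. $h(1,k)$ denotes the maximum number of pairwise distinct columns of an integer matrix with $k$ rows whose $k\times k$ minors have maximum absolute value exactly $1$; by Heller's theorem $h(1,k)=k^2+k+1$. *)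

(* Defs.v *)
From HB Require Import structures.
From mathcomp Require Import all_boot all_order all_algebra.
From mathcomp Require Import reals.
Set Implicit Arguments. Unset Strict Implicit. Unset Printing Implicit Defensive.
Import Order.TTheory GRing.Theory Num.Theory.
Local Open Scope ring_scope.

(* A real matrix is totally 1-submodular if every square submatrix (of every
   size k, rows selected by an injective f, columns by an injective g) has
   determinant of absolute value at most 1.  Reordering rows/columns only
   changes the sign of the determinant, so injective selections describe
   exactly the square submatrices up to sign. *)
Definition totally_1_submodular (R : numDomainType) (m n : nat)
  (M : 'M[R]_(m, n)) : Prop :=
  forall (k : nat) (f : 'I_k -> 'I_m) (g : 'I_k -> 'I_n),
    injective f -> injective g -> `|\det (mxsub f g M)| <= 1.

Definition shift_mx (R : numDomainType) (m n : nat)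
  (t : 'cV[R]_m) (A : 'M[int]_(m, n)) : 'M[R]_(m, n) :=
  \matrix_(i, j) (t i 0 + (A i j)%:~R).

(* n is admissible in the definition of the shifted Heller constant h_s(m):
   there exist t in [0,1)^m \ {0} and A in {-1,0,1}^{m x n} with pairwise
   distinct columns such that t + A is totally 1-submodular. *)
Definition shifted_Heller_admissible (R : realType) (m n : nat) : Prop :=
  exists (t : 'cV[R]_m) (A : 'M[int]_(m, n)),
    [/\ (forall i, 0 <= t i 0 /\ t i 0 < 1),
        t != 0,
        (forall i j, `|A i j| <= 1),
        injective (fun j => col j A)
      & totally_1_submodular (shift_mx t A)].

(* Main.v *)
Require Import Defs.
From HB Require Import structures.
From mathcomp Require Import all_boot all_order all_algebra.
From mathcomp Require Import reals.
From mathcomp Require Import perm lra zify.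
Set Implicit Arguments. Unset Strict Implicit. Unset Printing Implicit Defensive.
Import Order.TTheory GRing.Theory Num.Theory.
Local Open Scope ring_scope.
Section H.
Variable R : realType.

Definition Pnet k l (M : 'M[R]_(k,l)) := forall j,
  (forall i, M i j = 0 \/ M i j = 1 \/ M i j = -1) /\
  (forall i1 i2, M i1 j = 1 -> M i2 j = 1 -> i1 = i2) /\
  (forall i1 i2, M i1 j = -1 -> M i2 j = -1 -> i1 = i2).

Lemma Pnet_minor k (M : 'M[R]_k.+1) i0 j0 : Pnet M -> Pnet (row' i0 (col' j0 M)).
Proof.
move=> PM j; have [H1 [H2 H3]] := PM (lift j0 j); split; [|split].
- by move=> i; rewrite !mxE; apply: H1.
- by move=> i1 i2; rewrite !mxE => a b; apply: (lift_inj (H2 _ _ a b)).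
- by move=> i1 i2; rewrite !mxE => a b; apply: (lift_inj (H3 _ _ a b)).
Qed.

Lemma col_sum0 k l (M : 'M[R]_(k,l)) j i1 i2 : Pnet M -> i1 != i2 ->
  M i1 j != 0 -> M i2 j != 0 -> \sum_i M i j = 0.
Proof.
move=> PM ne n1 n2; have [H1 [H2 H3]] := PM j.
have [[e1 e2]|[e1 e2]] : (M i1 j = 1 /\ M i2 j = -1) \/ (M i1 j = -1 /\ M i2 j = 1).
- case: (H1 i1) n1 => [->|[e1|e1]]; rewrite ?eqxx // => _;
  case: (H1 i2) n2 => [->|[e2|e2]]; rewrite ?eqxx // => _.
  + by move: ne; rewrite (H2 _ _ e1 e2) eqxx.
  + by left.
  + by right.
  + by move: ne; rewrite (H3 _ _ e1 e2) eqxx.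
- rewrite (bigD1 i1) //= (bigD1 i2) /=; last by rewrite eq_sym.
  rewrite big1 ?addr0; first by rewrite e1 e2 subrr.
  move=> i /andP [ni1 ni2]; case: (H1 i) => [//|[e|e]].
  + by move/eqP: ni1 => /(_ (H2 _ _ e e1)).
  + by move/eqP: ni2 => /(_ (H3 _ _ e e2)).
- rewrite (bigD1 i1) //= (bigD1 i2) /=; last by rewrite eq_sym.
  rewrite big1 ?addr0; first by rewrite e1 e2 addrC subrr.
  move=> i /andP [ni1 ni2]; case: (H1 i) => [//|[e|e]].
  + by move/eqP: ni2 => /(_ (H2 _ _ e e2)).
  + by move/eqP: ni1 => /(_ (H3 _ _ e e1)).
Qed.

Lemma Pnet_det k (M : 'M[R]_k) : Pnet M -> `|\det M| <= 1.
Proof.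
elim: k M => [|k IH] M PM; first by rewrite det_mx00 normr1.
case: (boolP [exists j, [forall i1, forall i2,
   (i1 != i2) ==> (M i1 j == 0) || (M i2 j == 0)]]).
- case/existsP => j /forallP Hj; rewrite (expand_det_col _ j).
  case: (boolP [exists i, M i j != 0]).
  + case/existsP => i0 nz; rewrite (bigD1 i0) //= big1 ?addr0.
    * rewrite normrM /cofactor normrM normrX normrN1 expr1n mul1r.
      have -> : `|M i0 j| = 1.
        by have [H1 _] := PM j; case: (H1 i0) nz => [->|[->|->]];
          rewrite ?eqxx // ?normr1 ?normrN1.
      by rewrite mul1r; apply: IH; apply: Pnet_minor.
    * move=> i ne; move/forallP: (Hj i0) => /(_ i).
      by rewrite eq_sym ne /= (negbTE nz) /= => /eqP ->; rewrite mul0r.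
  + rewrite negb_exists => /forallP H; rewrite big1 ?normr0 // => i _.
    by move: (H i); rewrite negbK => /eqP ->; rewrite mul0r.
- rewrite negb_exists => /forallP Hn.
  suff /eqP -> : \det M == 0 by rewrite normr0.
  apply/det0P; exists (const_mx 1).
    by apply/eqP => /matrixP /(_ 0 0); rewrite !mxE; apply/eqP; rewrite oner_eq0.
  apply/matrixP => i j; rewrite !mxE.
  move/forallPn: (Hn j) => [i1 /forallPn [i2]].
  rewrite negb_imply negb_or => /andP [ne /andP [n1 n2]].
  under eq_bigr do rewrite mxE mul1r.
  exact: col_sum0 PM ne n1 n2.
Qed.

Lemma det_row_small k (N : 'M[R]_k) (i0 : 'I_k) (c : R) :
  (forall j, `|N i0 j| <= c) -> (forall i j, `|N i j| <= 1) ->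
  `|\det N| <= c * k`!%:R.
Proof.
move=> Hr Ha; have c0 : 0 <= c by apply: le_trans (Hr i0).
rewrite /determinant; apply: le_trans (ler_norm_sum _ _ _) _.
apply: le_trans (_ : \sum_(s : 'S_k) c <= _).
  apply: ler_sum => s _.
  rewrite normrM normrX normrN1 expr1n mul1r normr_prod (bigD1 i0) //=.
  apply: le_trans (_ : `|N i0 (s i0)| * 1 <= _).
    by apply: ler_wpM2l => //; apply: prodr_ile1 => i _; rewrite normr_ge0 Ha.
  by rewrite mulr1.
by rewrite sumr_const card_Sn mulr_natr.
Qed.

End H.
Section M.
Variable R : realType.

Lemma entry_cases (x y : bool) :
  ((((x : nat)%:Z - (y : nat)%:Z)%:~R : R) = 0 \/ (((x : nat)%:Z - (y : nat)%:Z)%:~R : R) = 1 \/ (((x : nat)%:Z - (y : nat)%:Z)%:~R : R) = -1) /\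
  ((((x : nat)%:Z - (y : nat)%:Z)%:~R : R) = 1 -> x) /\ ((((x : nat)%:Z - (y : nat)%:Z)%:~R : R) = -1 -> y).
Proof.
case: x; case: y => /=; rewrite ?subrr ?subr0 ?sub0r ?intrN ?intr0 ?mulr1z ?mulr0z.
all: split; [by auto | split=> h //; lra].
Qed.


Lemma entry_abs (x y : bool) : `|(x : nat)%:Z - (y : nat)%:Z| <= 1.
Proof. by case: x; case: y. Qed.



Lemma ord_det m (a1 a2 : 'I_m.+1) :
  (forall i, i != ord0 -> (i == a1) = (i == a2)) -> a1 = a2.
Proof.
move=> H; have [e1|n1] := eqVneq a1 ord0.
  have [e2|n2] := eqVneq a2 ord0; first by rewrite e1 e2.
  by move: (H a2 n2); rewrite eqxx e1 (negbTE n2).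
by move: (H a1 n1); rewrite eqxx => /esym/eqP.
Qed.

End M.

Theorem proposition2p6 (R : realType) (m : nat) (hm : (0 < m)%N) :
  (exists n : nat, (m * (m - 1) + 1 <= n)%N /\ shifted_Heller_admissible R m n)
  /\ ((2 <= m)%N -> m * (m - 1) + 1 = (m - 1) ^ 2 + (m - 1) + 1)%N.
Proof.
split; last first.
  move=> _; case: m hm => // m _; rewrite subn1 /=.
  by rewrite expnS expn1 mulSn; lia.
case: m hm => [//|m] _.
pose S := (ord0, ord0) |: [set p : 'I_m.+1 * 'I_m.+1 | p.1 != p.2].
have cardS : (m.+1 * m + 1 <= #|S|)%N.
  rewrite cardsU1 inE /=.
  have E : [set p : 'I_m.+1 * 'I_m.+1 | p.1 != p.2] =
           ~: [set p : 'I_m.+1 * 'I_m.+1 | p.1 == p.2].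
    by apply/setP => p; rewrite !inE.
  have C := cardsC [set p : 'I_m.+1 * 'I_m.+1 | p.1 == p.2].
  rewrite card_prod !card_ord in C.
  have D : (#|[set p : 'I_m.+1 * 'I_m.+1 | p.1 == p.2]| <= m.+1)%N.
    have sub : [set p : 'I_m.+1 * 'I_m.+1 | p.1 == p.2] \subset
               [set (i, i) | i : 'I_m.+1].
      apply/subsetP => -[a b]; rewrite inE /= => /eqP <-.
      by apply/imsetP; exists a.
    apply: leq_trans (subset_leq_card sub) _.
    by apply: leq_trans (leq_imset_card _ _) _; rewrite card_ord.
  rewrite E; move: C D; rewrite mulnS; move: (#|~: _|) (#|[set p | _ == _]|) => e d; lia.
exists #|S|; split; first by rewrite subSS subn0.
pose h (j : 'I_#|S|) := enum_val j.
pose A : 'M[int]_(m.+1, #|S|) := \matrix_(i, j)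
  (if i == ord0 then -1 else (((i == (h j).1) : nat)%:Z - ((i == (h j).2) : nat)%:Z)).
pose x : R := ((m.+1)`!.+1)%:R^-1.
have x0 : 0 < x by rewrite invr_gt0 ltr0n.
have x1 : x < 1.
  rewrite invf_lt1 ?ltr0n // ltr1n ltnS fact_gt0 //.
pose t : 'cV[R]_m.+1 := \col_i (if i == ord0 then 1 - x else 0).
have rowval : forall i j, i = ord0 -> shift_mx t A i j = - x.
  move=> i j ->; rewrite !mxE eqxx mulrN1z; lra.
exists t, A; split.
- by move=> i; rewrite mxE; case: (i == ord0); split; lra.
- apply/eqP => /matrixP /(_ ord0 0); rewrite !mxE eqxx => /eqP; lra.
- move=> i j; rewrite mxE; case: (i == ord0) => //.
  exact: entry_abs.
- move=> j1 j2 /matrixP E.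
  have key : forall j i, i != ord0 ->
      ((A i j == 1) = (i == (h j).1)) /\ ((A i j == -1) = (i == (h j).2)).
    move=> j i ni; rewrite mxE (negbTE ni).
    have : h j \in S := enum_valP j.
    case: (h j) => a b; rewrite !inE /= => /orP [/eqP [-> ->] | nab].
      by rewrite (negbTE ni).
    have [->|nia] := eqVneq i a.
      by rewrite ?eqxx (negbTE nab).
    by case: (i == b).
  have eqA : forall i, A i j1 = A i j2 by move=> i; have := E i 0; rewrite !mxE.
  apply: enum_val_inj.
  rewrite [enum_val j1]surjective_pairing [enum_val j2]surjective_pairing.
  congr pair; apply: ord_det => i ni.
    by rewrite -(key j1 i ni).1 -(key j2 i ni).1 eqA.
  by rewrite -(key j1 i ni).2 -(key j2 i ni).2 eqA.
- move=> k f g fi gi.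
  have kle : (k <= m.+1)%N by have := leq_card f fi; rewrite !card_ord.
  case: (boolP [exists i, f i == ord0]).
  + case/existsP => i0 /eqP fi0.
    apply: (le_trans (@det_row_small R k (mxsub f g (shift_mx t A)) i0 x _ _)).
    * by move=> j; rewrite mxE rowval // normrN gtr0_norm.
    * move=> i j; rewrite mxE.
      have [e|ne] := eqVneq (f i) ord0.
        by rewrite rowval // normrN gtr0_norm // ltW.
      rewrite !mxE (negbTE ne) add0r.
      have [[->|[->|->]] _] := entry_cases R (f i == (h (g j)).1) (f i == (h (g j)).2).
      - by rewrite normr0.
      - by rewrite normr1.
      - by rewrite normrN1.
    * rewrite /x mulrC ler_pdivrMr ?ltr0n // mul1r ler_nat.
      have := leq_fact kle; lia.
  + rewrite negb_exists => /forallP nf.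
    apply: Pnet_det => j.
    have ent : forall i, mxsub f g (shift_mx t A) i j =
      ((((f i == (h (g j)).1) : nat)%:Z - ((f i == (h (g j)).2) : nat)%:Z)%:~R).
      by move=> i; rewrite !mxE (negbTE (nf i)) add0r.
    split; [|split].
    * by move=> i; rewrite ent; exact: (entry_cases _ _ _).1.
    * move=> i1 i2; rewrite !ent => /(entry_cases _ _ _).2.1/eqP e1
        /(entry_cases _ _ _).2.1/eqP e2.
      by apply: fi; rewrite e1 e2.
    * move=> i1 i2; rewrite !ent => /(entry_cases _ _ _).2.2/eqP e1
        /(entry_cases _ _ _).2.2/eqP e2.
      by apply: fi; rewrite e1 e2.
Qed.
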